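(* For every $\varepsilon,\delta\in(0,1)$ and $n,r\in\mathbb{N}$, define \[ \varepsilon_0=\frac{\varepsilon}{\sqrt{8r\log(2/\delta)}},\qquad\delta_0=\frac{\delta}{2r},\qquad\lambda^*=\lambda^*(n,\varepsilon_0,\delta_0). \] Then for every $\lambda\ge\lambda^*$, the real-sum protocol $P^{\mathbb{R}}_{n,\lambda,r}$ is $(\varepsilon,\delta)$-differentially private in the shuffled model.
   Context: Differential privacy: an algorithm $M$ on datasets is $(\varepsilon,\delta)$-differentially private if for all datasets $X,X'$ differing in one user's entry and every output set $T$, $\Pr[M(X)\in T]\le e^\varepsilon\Pr[M(X')\in T]+\delta$; a shuffled protocol is $(\varepsilon,\delta)$-differentially private if the map from users' data to the uniformly randomly permuted multiset of all messages is. Bit randomizer $R^{0/1}_{n,\lambda}(b)$, $b\in\{0,1\}$: draw $\mathbf{b}\sim\mathrm{Ber}(\lambda/n)$; output $b$ if $\mathbf{b}=0$, a fresh $\mathrm{Ber}(1/2)$ bit if $\mathbf{b}=1$. The bit-sum protocol with $n$ users has each user send $R^{0/1}_{n,\lambda}(x_i)$ for $x_i\in\{0,1\}$. $\lambda^*(n,\varepsilon,\delta)$ is the minimum value of $\lambda$ such that the bit-sum protocol with $n$ users is $(\varepsilon,\delta)$-differentially private in the shuffled model. Encoder $E_r(x)$, $x\in[0,1]$: $\mu=\lceil xr\rceil$, $p=xr-\mu+1$, and $b_j=1$ for $j<\mu$, $b_j\sim\mathrm{Ber}(p)$ for $j=\mu$, $b_j=0$ for $j>\mu$ ($j=1,\dots,r$).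 Real-sum protocol $P^{\mathbb{R}}_{n,\lambda,r}$: user $i$ computes $(b_{i,1},\dots,b_{i,r})=E_r(x_i)$ and sends the $r$ messages $R^{0/1}_{n,\lambda}(b_{i,j})$ (independent randomness); all $nr$ messages are shuffled; the analyzer outputs $\frac1r\cdot\frac{n}{n-\lambda}(\sum_{i,j}y_{i,j}-\frac{\lambda r}{2})$. $\log$ is the natural logarithm. *)

(* Defs.v *)
From mathcomp Require Import all_boot all_order all_algebra.
From mathcomp Require Import reals.
From mathcomp.analysis Require Import sequences exp.
Unset Printing Implicit Defensive.
Import Order.TTheory GRing.Theory Num.Theory.
Local Open Scope ring_scope.

Section Defs.
Context {R : realType}.

(* Output of the shuffler on bit messages: the multiset of all messages,
   represented by its multiplicity function  m |-> #{messages equal to m}. *)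
Definition mset_out := {ffun bool -> nat}.

(* Pr[ R^{0/1}_{n,lambda}(b) = y ]: with prob. lambda/n a fresh Ber(1/2) bit,
   otherwise b itself. *)
Definition randP (n : nat) (lam : R) (b y : bool) : R :=
  (1 - lam / n%:R) * (b == y)%:R + (lam / n%:R) / 2.

Definition bitsum_view {n : nat} (y : {ffun 'I_n -> bool}) : mset_out :=
  [ffun m => #|[set i : 'I_n | y i == m]|].

Definition bitsum_prob (n : nat) (lam : R) (X : 'I_n -> bool)
  (T : pred mset_out) : R :=
  \sum_(y : {ffun 'I_n -> bool} | T (bitsum_view y))
     \prod_(i < n) randP n lam (X i) (y i).

Definition dp_private {D : Type} {n : nat} (dom : D -> Prop)
  (M : ('I_n -> D) -> pred mset_out -> R) (eps delta : R) : Prop :=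
  forall X X' : 'I_n -> D,
    (forall i, dom (X i)) -> (forall i, dom (X' i)) ->
    (exists k : 'I_n, forall i, i != k -> X i = X' i) ->
    forall T : pred mset_out, M X T <= expR eps * M X' T + delta.

Definition bitsum_private (n : nat) (lam eps delta : R) : Prop :=
  dp_private (fun _ : bool => True) (fun X => bitsum_prob n lam X) eps delta.

(* ls is lambda^*(n,eps,delta): the minimum lambda (over the admissible range
   0 <= lambda <= n, where Ber(lambda/n) makes sense) for which the bit-sum
   protocol is (eps,delta)-DP in the shuffled model. *)
Definition is_lambda_star (n : nat) (eps delta ls : R) : Prop :=
  [/\ 0 <= ls <= n%:R, bitsum_private n ls eps delta &
      forall lam, 0 <= lam <= n%:R -> bitsum_private n lam eps delta -> ls <= lam].

(* Pr[ E_r(x) = b ], coordinates j = 1..r are indexed by j-1 : 'I_r *)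
Definition encP (r : nat) (x : R) (b : {ffun 'I_r -> bool}) : R :=
  let mu : int := Num.ceil (x * r%:R) in
  let p : R := x * r%:R - mu%:~R + 1 in
  \prod_(j < r)
    (let jj : int := (j.+1)%:Z in
     let q1 : R := if jj < mu then 1 else if jj == mu then p else 0 in
     if b j then q1 else 1 - q1).

Definition realsum_view {n r : nat} (y : {ffun 'I_n -> {ffun 'I_r -> bool}})
  : mset_out :=
  [ffun m => #|[set p : 'I_n * 'I_r | y p.1 p.2 == m]|].

Definition userP (n r : nat) (lam x : R) (yi : {ffun 'I_r -> bool}) : R :=
  \sum_(b : {ffun 'I_r -> bool}) encP r x b * \prod_(j < r) randP n lam (b j) (yi j).

Definition realsum_prob (n r : nat) (lam : R) (X : 'I_n -> R)
  (T : pred mset_out) : R :=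
  \sum_(y : {ffun 'I_n -> {ffun 'I_r -> bool}} | T (realsum_view y))
     \prod_(i < n) userP n r lam (X i) (y i).

Definition realsum_private (n r : nat) (lam eps delta : R) : Prop :=
  dp_private (fun x : R => 0 <= x <= 1) (fun X => realsum_prob n r lam X) eps delta.

End Defs.

(* Main.v *)
Require Import Defs.
From mathcomp Require Import all_boot all_order all_algebra.
From mathcomp Require Import reals.
From mathcomp.analysis Require Import sequences exp.
From mathcomp Require Import ring lra.
Import Order.TTheory GRing.Theory Num.Theory.
Local Open Scope ring_scope.

Section NumS.
Variable R : realType.

Lemma expR_le_inv (u : R) : u < 1 -> expR u * (1 - u) <= 1.
Proof.
move=> hu.
have h := expR_ge1Dx (- u).
have e := expRxMexpNx_1 u.
have p := expR_gt0 u.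
nra.
Qed.

Lemma cosh_small (z : R) : -(1/2) <= z <= 1/2 -> (expR z + expR (-z))/2 <= expR (z^+2).
Proof.
move=> /andP[h1 h2].
set u := z / 2.
have ez : expR z = expR u ^+ 2 by rewrite -expRM_natl /u; congr expR; lra.
have ezn : expR (-z) = expR (-u) ^+ 2 by rewrite -expRM_natl /u; congr expR; lra.
have hA := expR_le_inv (u) ltac:(rewrite /u; lra).
have hB := expR_le_inv (-u) ltac:(rewrite /u; lra).
have pA := expR_gt0 u. have pB := expR_gt0 (-u).
have hE := expR_ge1Dx (z ^+ 2).
rewrite ez ezn.
set A := expR u in hA pA *. set B := expR (-u) in hB pB *.
have hz2 : z ^+ 2 = 4 * u ^+ 2 by rewrite /u; field.
rewrite hz2 in hE *.
have hu1 : -(1/4) <= u <= 1/4 by rewrite /u; apply/andP; split; lra.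
case/andP: hu1 => hu1 hu2.
have A2 : A ^+ 2 * (1 - u) ^+ 2 <= 1.
  have q : 0 <= A * (1 - u) by nra.
  rewrite -exprMn; nra.
have B2 : B ^+ 2 * (1 + u) ^+ 2 <= 1.
  have q : 0 <= B * (1 + u) by nra.
  rewrite -exprMn; nra.
have A3 : A ^+ 2 <= ((1 - u) ^+ 2)^-1.
  rewrite -ler_pdivlMr in A2; first by rewrite mul1r in A2.
  nra.
have B3 : B ^+ 2 <= ((1 + u) ^+ 2)^-1.
  rewrite -ler_pdivlMr in B2; first by rewrite mul1r in B2.
  nra.
apply: le_trans hE.
suff : ((1 - u) ^+ 2)^-1 + ((1 + u) ^+ 2)^-1 <= 2 * (1 + 4 * u ^+ 2) by lra.
have p1 : 0 < (1 - u) ^+ 2 by nra.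
have p2 : 0 < (1 + u) ^+ 2 by nra.
rewrite -(ler_pM2r (mulr_gt0 p1 p2)).
rewrite mulrDl mulrA mulVf ?gt_eqF // mul1r (mulrC ((1 - u) ^+ 2)) mulrA mulVf ?gt_eqF // mul1r.
have hw : 0 <= u ^+ 2 <= 1/16 by apply/andP; split; nra.
rewrite -subr_ge0.
have -> : 2 * (1 + 4 * u ^+ 2) * ((1 + u) ^+ 2 * (1 - u) ^+ 2) - ((1 + u) ^+ 2 + (1 - u) ^+ 2)
   = 2 * u ^+ 2 * (1 - 7 * u ^+ 2 + 4 * (u ^+ 2) ^+ 2) by ring.
case/andP: hw => hw1 hw2.
apply: mulr_ge0; first nra.
nra.
Qed.


Lemma cosh_double (y : R) : (expR y + expR (-y))/2 <= expR (y^+2) ->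
  (expR (2*y) + expR (-(2*y)))/2 <= expR ((2*y)^+2).
Proof.
move=> h.
have e1 : expR (2*y) = expR y ^+ 2 by rewrite -expRM_natl.
have e2 : expR (-(2*y)) = expR (-y) ^+ 2 by rewrite -expRM_natl; congr expR; ring.
have e3 : expR ((2*y)^+2) = expR (y^+2) ^+ 4 by rewrite -expRM_natl; congr expR; ring.
have e4 := expRxMexpNx_1 y.
rewrite e1 e2 e3.
have p1 := expR_gt0 y. have p2 := expR_gt0 (-y). have p3 := expR_gt0 (y ^+ 2).
set a := expR y in e4 p1 h *. set b := expR (-y) in e4 p2 h *. set w := expR (y ^+ 2) in p3 h *.
have hc : 0 <= (a + b) / 2 by lra.
have hsq : ((a + b) / 2) ^+ 2 <= w ^+ 2 by nra.
have -> : (a ^+ 2 + b ^+ 2) / 2 = 2 * ((a + b) / 2) ^+ 2 - a * b by field.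
rewrite e4.
have -> : w ^+ 4 = (w ^+ 2) ^+ 2 by rewrite -exprM.
move: hsq; set c := ((a + b) / 2) ^+ 2; set W := w ^+ 2 => hsq.
have : 0 <= (W - 1) ^+ 2 by apply: sqr_ge0.
nra.
Qed.

Lemma cosh_boundN (N : nat) (y : R) : -(2^+N/2) <= y <= 2^+N/2 ->
  (expR y + expR (-y))/2 <= expR (y^+2).
Proof.
elim: N y => [|N IH] y hy.
  by apply: cosh_small; rewrite expr0 in hy.
have -> : y = 2 * (y / 2) by field.
apply: cosh_double; apply: IH.
rewrite exprS in hy; case/andP: hy => h1 h2; apply/andP; split; lra.
Qed.

Lemma cosh_bound (y : R) : (expR y + expR (-y))/2 <= expR (y^+2).
Proof.
set N := (Num.trunc (2 * `|y|)).+1.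
apply: (@cosh_boundN N).
have h1 : 2 * `|y| < N%:R by rewrite /N; apply: truncnS_gt.
have h2 : (N%:R : R) <= 2 ^+ N.
  by rewrite -natrX ler_nat; apply: ltnW; apply: ltn_expl.
have h3 := ler_norm y.
have h4 : - y <= `|y| by rewrite -normrN ler_norm.
apply/andP; split; lra.
Qed.


Lemma g_bound (a : R) (k : nat) : 0 < a ->
  ((expR a - 1) * expR (-a) ^+ k.+1 + (1 - expR (-a)) * expR a ^+ k.+1)
    / (expR a - expR (-a)) <= expR (((k%:R + 1/2) * a)^+2).
Proof.
move=> ha.
set y := (k%:R + 1/2) * a.
apply: le_trans (cosh_bound y).
set q := expR (a/2). set q' := expR (-(a/2)).
set p := expR y. set p' := expR (-y).
have eb : expR a = q ^+ 2 by rewrite -expRM_natl; congr expR; field.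
have ea : expR (-a) = q' ^+ 2 by rewrite -expRM_natl; congr expR; field.
have ebk : expR a ^+ k.+1 = q * p by rewrite -expRM_natl -expRD; congr expR; rewrite /y; rewrite -natr1; field.
have eak : expR (-a) ^+ k.+1 = q' * p' by rewrite -expRM_natl -expRD; congr expR; rewrite /y; rewrite -natr1; field.
rewrite ebk eak eb ea.
have hq : q * q' = 1 by apply: expRxMexpNx_1.
have hp : p * p' = 1 by apply: expRxMexpNx_1.
have q1 : 1 < q by rewrite expR_gt1; lra.
have pq' : 0 < q' by apply: expR_gt0.
have pp : 0 < p by apply: expR_gt0.
have pp' : 0 < p' by apply: expR_gt0.
have hqq : q' < q by nra.
have hd : 0 < q ^+ 2 - q' ^+ 2 by nra.
rewrite ler_pdivrMr //.
have -> : (q ^+ 2 - 1) * (q' * p') + (1 - q' ^+ 2) * (q * p) = (q - q') * (p + p').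
  have -> : q ^+ 2 - 1 = q * (q - q') by rewrite -hq; ring.
  have -> : 1 - q' ^+ 2 = q' * (q - q') by rewrite -hq; ring.
  have -> : q * (q - q') * (q' * p') = (q * q') * (q - q') * p' by ring.
  have -> : q' * (q - q') * (q * p) = (q * q') * (q - q') * p by ring.
  rewrite hq; ring.
have -> : (p + p') / 2 * (q ^+ 2 - q' ^+ 2) = (q - q') * (p + p') * ((q + q') / 2) by field.
have h2 : 1 <= (q + q') / 2 by nra.
rewrite -{1}[(q - q') * (p + p')]mulr1.
apply: ler_wpM2l => //; nra.
Qed.


Lemma ln2_ge : 3/5 <= ln (2 : R).
Proof.
have h := @expR_le_inv (1/5 : R) ltac:(lra).
have p := expR_gt0 (1/5 : R).
have e : expR (3/5 : R) = expR (1/5) ^+ 3 by rewrite -expRM_natl; congr expR; lra.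
have h2 : expR (3/5 : R) <= 2.
  rewrite e. have h1 : expR (1/5 : R) <= 5/4 by lra.
  have : expR (1/5 : R) ^+ 3 <= (5/4) ^+ 3.
    by apply: lerXn2r; rewrite ?nnegrE; lra.
  lra.
by rewrite -(expRK (3/5)) ler_ln ?posrE ?expR_gt0.
Qed.

Lemma final_num (eps delta : R) (r : nat) : 0 < eps < 1 -> 0 < delta < 1 -> (0 < r)%N ->
  r%:R * (delta / (2 * r%:R)) +
  expR (- ((Num.trunc (4 * ln (2/delta) / eps))%:R * eps)) *
  (expR ((((Num.trunc (4 * ln (2/delta) / eps))%:R + 1/2) *
     (eps / Num.sqrt (8 * r%:R * ln (2 / delta))))^+2)) ^+ r <= delta.
Proof.
move=> /andP[e0 e1] /andP[d0 d1] r0.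
set L := ln (2/delta).
set s := Num.trunc (4 * L / eps).
have hL : 3/5 <= L.
  apply: le_trans ln2_ge _.
  have h2 : (0:R) < 2 / delta by apply: divr_gt0.
  rewrite ler_ln ?posrE //.
  rewrite ler_pdivlMr //; lra.
have rp : (0 : R) < r%:R by rewrite ltr0n.
have hs1 : s%:R <= 4 * L / eps by rewrite truncn_le; apply: divr_ge0; lra.
have hs2 : 4 * L / eps < s%:R + 1 by rewrite natr1; apply: truncnS_gt.
have hx1 : s%:R * eps <= 4 * L by rewrite -ler_pdivlMr.
have hx2 : 4 * L < s%:R * eps + eps.
  have : 4 * L < (s%:R + 1) * eps by rewrite -ltr_pdivrMr.
  lra.
have sq : Num.sqrt (8 * r%:R * L) ^+ 2 = 8 * r%:R * L by rewrite sqr_sqrtr //; nra.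
have sqp : 0 < Num.sqrt (8 * r%:R * L) by rewrite sqrtr_gt0; nra.
have -> : r%:R * (delta / (2 * r%:R)) = delta / 2 by field; lra.
rewrite -expRM_natr -expRD.
have ex : ((s%:R + 1 / 2) * (eps / Num.sqrt (8 * r%:R * L))) ^+ 2 * r%:R
   = (s%:R + 1/2) ^+ 2 * eps ^+ 2 / (8 * L).
  rewrite exprMn expr_div_n sq; field; apply/andP; split; lra.
rewrite ex.
have key : - (s%:R * eps) + (s%:R + 1 / 2) ^+ 2 * eps ^+ 2 / (8 * L) <= - L.
  have -> : (s%:R + 1 / 2) ^+ 2 * eps ^+ 2 = (s%:R * eps + eps / 2) ^+ 2 by ring.
  move: hx1 hx2; set x := s%:R * eps => hx1 hx2.
  suff h : (x + eps / 2) ^+ 2 / (8 * L) <= x - L by lra.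
  rewrite ler_pdivrMr; last lra.
  set d := 4 * L - x.
  have -> : x = 4 * L - d by rewrite /d; ring.
  have hd1 : 0 <= d by rewrite /d; lra.
  have hd2 : d <= eps by rewrite /d; lra.
  have h3 : (eps / 2 - d) ^+ 2 <= eps ^+ 2 / 4 by nra.
  have -> : (4 * L - d + eps / 2) ^+ 2 = 16 * L ^+ 2 + (eps/2 - d) ^+ 2 + 8 * L * (eps / 2 - d) by ring.
  nra.
suff : expR (- (s%:R * eps) + (s%:R + 1 / 2) ^+ 2 * eps ^+ 2 / (8 * L)) <= delta / 2 by lra.
apply: le_trans (_ : expR (- L) <= _); first by rewrite ler_expR.
rewrite expRN /L lnK ?posrE; last by apply: divr_gt0.
rewrite invf_div; lra.
Qed.

End NumS.

Section Chord.
Variable R : realType.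

Lemma subXX_le (u v : R) (n : nat) : 0 <= u <= v ->
  (v - u) * (n%:R * u ^+ n.-1) <= v ^+ n - u ^+ n <= (v - u) * (n%:R * v ^+ n.-1).
Proof.
move=> /andP[hu huv].
rewrite subrXX.
have hvu : 0 <= v - u by lra.
have hs : forall i : 'I_n, u ^+ n.-1 <= v ^+ (n.-1 - i) * u ^+ i <= v ^+ n.-1.
  move=> i.
  have hi : (i <= n.-1)%N by case: i => i hi /=; rewrite -ltnS; case: n hi => //.
  have eu : u ^+ n.-1 = u ^+ (n.-1 - i) * u ^+ i by rewrite -exprD subnK.
  have ev : v ^+ n.-1 = v ^+ (n.-1 - i) * v ^+ i by rewrite -exprD subnK.
  apply/andP; split.
    rewrite eu ler_wpM2r ?exprn_ge0 //.
    by apply: lerXn2r; rewrite ?nnegrE //; lra.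
  rewrite ev ler_wpM2l ?exprn_ge0 //; first lra.
  by apply: lerXn2r; rewrite ?nnegrE //; lra.
have sc : forall c : R, \sum_(i < n) c = n%:R * c by move=> c; rewrite sumr_const card_ord mulr_natl.
apply/andP; split; apply: ler_wpM2l => //; rewrite -sc.
  by apply: ler_sum => i _; case/andP: (hs i).
by apply: ler_sum => i _; case/andP: (hs i).
Qed.

Lemma chord (al be z : R) (n : nat) : 0 < al < be -> al <= z <= be ->
  (be - al) * z ^+ n <= (be - z) * al ^+ n + (z - al) * be ^+ n.
Proof.
move=> /andP[h0 h1] /andP[h2 h3].
have [A1 A2] := andP (@subXX_le al z n ltac:(apply/andP; split; lra)).
have [B1 B2] := andP (@subXX_le z be n ltac:(apply/andP; split; lra)).
suff : (be - z) * (z ^+ n - al ^+ n) <= (z - al) * (be ^+ n - z ^+ n) by nra.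
apply: le_trans (_ : (be - z) * ((z - al) * (n%:R * z ^+ n.-1)) <= _).
  apply: ler_wpM2l; lra.
rewrite mulrA (mulrC (be - z)) -mulrA.
apply: ler_wpM2l; lra.
Qed.


Lemma col_term (al be A B : R) (k : nat) : 0 < al < be -> 0 <= B -> al * B <= A <= be * B ->
  A ^+ k.+1 / B ^+ k <=
  (be * al ^+ k.+1 * B - al * be ^+ k.+1 * B + (be ^+ k.+1 - al ^+ k.+1) * A) / (be - al).
Proof.
move=> hab hB /andP[h1 h2].
have [a0 a1] := andP hab.
have hd : 0 < be - al by lra.
have [hB0|Bp] := eqVneq B 0.
  subst B; rewrite !mulr0 in h1 h2.
  have -> : A = 0 by lra.
  by rewrite !mulr0 !expr0n /= !mul0r subrr add0r mul0r.
have Bp' : 0 < B by rewrite lt_def Bp hB.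
set Z := A / B.
have eA : A = Z * B by rewrite /Z mulfVK.
have hz1 : al <= Z by rewrite /Z ler_pdivlMr.
have hz2 : Z <= be by rewrite /Z ler_pdivrMr.
have hc := @chord al be Z k.+1 hab ltac:(apply/andP; split; lra).
have eL : (Z * B) ^+ k.+1 / B ^+ k = Z ^+ k.+1 * B.
  by rewrite exprMn [B ^+ k.+1]exprSr mulrA mulrAC mulfK ?expf_neq0.
rewrite eA eL.
rewrite ler_pdivlMr //.
have e2 : (be * al ^+ k.+1 * B - al * be ^+ k.+1 * B + (be ^+ k.+1 - al ^+ k.+1) * (Z * B))
   = B * ((be - Z) * al ^+ k.+1 + (Z - al) * be ^+ k.+1) by ring.
rewrite e2.
have e3 : Z ^+ k.+1 * B * (be - al) = B * ((be - al) * Z ^+ k.+1) by ring.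
rewrite e3; apply: ler_wpM2l => //; lra.
Qed.

End Chord.

Section Decomp.
Variable R : realType.
Variable K : finType.

Definition cA0 (e : R) (p q : K -> R) (x : K) : R := if e * q x < p x then e * q x else p x.
Definition mA (e : R) (p q : K -> R) : R := \sum_x cA0 e p q x.
Definition tt (e : R) (p q : K -> R) : R := (mA e p q - mA e q p) / (mA e p q - mA e q p / e).
Definition shr (e : R) (p q : K -> R) (x : K) : R :=
  (1 - tt e p q) * cA0 e p q x + tt e p q * (cA0 e q p x / e).
Definition decA (e : R) (p q : K -> R) (x : K) : R :=
  if mA e q p <= mA e p q then shr e p q x else cA0 e p q x.
Definition decB (e : R) (p q : K -> R) (x : K) : R :=
  if mA e q p <= mA e p q then cA0 e q p x else shr e q p x.

Variable e : R.
Hypothesis e1 : 1 <= e.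

Lemma cA0_facts (p q : K -> R) x : 0 <= p x -> 0 <= q x ->
  [/\ 0 <= cA0 e p q x, cA0 e p q x <= p x, cA0 e p q x <= e * q x &
      cA0 e p q x <= e * cA0 e q p x].
Proof.
move=> hp hq; rewrite /cA0.
have e1x : (1 : R) <= e := e1. have e0 : 0 <= e by lra.
have ep0 : 0 <= e * p x by apply: mulr_ge0.
have eq0 : 0 <= e * q x by apply: mulr_ge0.
have hpe : p x <= e * p x by rewrite ler_peMl.
have hqe : q x <= e * q x by rewrite ler_peMl.
have hpe2 : e * p x <= e * (e * p x) by rewrite ler_peMl.
have hqe2 : e * q x <= e * (e * q x) by rewrite ler_peMl.
case: ltP => h1; case: ltP => h2; split; lra.
Qed.

Lemma mA_ge0 (p q : K -> R) : (forall x, 0 <= p x) -> (forall x, 0 <= q x) -> 0 <= mA e p q.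
Proof.
move=> hp hq; apply: sumr_ge0 => x _; by case: (@cA0_facts p q x (hp x) (hq x)).
Qed.

Lemma half_facts (p q : K -> R) : (forall x, 0 <= p x) -> (forall x, 0 <= q x) ->
  mA e q p <= mA e p q ->
  [/\ forall x, 0 <= shr e p q x <= p x,
      \sum_x shr e p q x = mA e q p,
      forall x, shr e p q x <= e * cA0 e q p x &
      forall x, cA0 e q p x <= e * shr e p q x].
Proof.
move=> hp hq hle.
have e1x : (1 : R) <= e := e1.
move: hle; set a := mA e p q; set b := mA e q p => hle.
have b0 : 0 <= b by apply: mA_ge0.
have e0 : 0 < e by lra.
have hbe : b / e <= b by rewrite ler_pdivrMr //; nra.
have ht : 0 <= tt e p q <= 1.
  rewrite /tt -/a -/b.
  have [hz|hnz] := eqVneq (a - b / e) 0.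
    by rewrite hz invr0 mulr0 lexx ler01.
  have hpos : 0 < a - b / e by rewrite lt_def hnz /=; lra.
  apply/andP; split; first by apply: divr_ge0; lra.
  by rewrite ler_pdivrMr //; lra.
have [t0 t1] := andP ht.
have pw : forall x, [/\ 0 <= cA0 e p q x, cA0 e p q x <= p x, cA0 e p q x <= e * q x &
      cA0 e p q x <= e * cA0 e q p x] /\
    [/\ 0 <= cA0 e q p x, cA0 e q p x <= q x, cA0 e q p x <= e * p x &
      cA0 e q p x <= e * cA0 e p q x].
  by move=> x; split; apply: cA0_facts.
split.
- move=> x; have [[a1 a2 a3 a4] [b1 b2 b3 b4]] := pw x; rewrite /shr.
  have hq1 : 0 <= cA0 e q p x / e by apply: divr_ge0; lra.
  have hq2 : cA0 e q p x / e <= p x by rewrite ler_pdivrMr // mulrC.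
  apply/andP; split; nra.
- rewrite /shr big_split /= -!mulr_sumr -mulr_suml.
  have ea : \sum_i cA0 e p q i = a by [].
  have eb : \sum_i cA0 e q p i = b by [].
  rewrite ea eb /tt -/a -/b.
  have [hz|hnz] := eqVneq (a - b / e) 0.
    rewrite hz invr0 mulr0 subr0 mul1r mul0r addr0.
    lra.
  have -> : (1 - (a - b) / (a - b / e)) * a + (a - b) / (a - b / e) * (b / e)
     = a - (a - b) / (a - b / e) * (a - b / e) by ring.
  rewrite mulfVK //; ring.
- move=> x; have [[a1 a2 a3 a4] [b1 b2 b3 b4]] := pw x; rewrite /shr.
  have hq3 : cA0 e q p x / e <= e * cA0 e q p x.
    rewrite ler_pdivrMr //; nra.
  nra.
- move=> x; have [[a1 a2 a3 a4] [b1 b2 b3 b4]] := pw x; rewrite /shr.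
  have hq4 : cA0 e q p x = e * (cA0 e q p x / e) by field; lra.
  nra.
Qed.


Lemma mA_lb (p q : K -> R) (d0 : R) : \sum_x p x = 1 ->
  \sum_(x | e * q x < p x) p x <= e * \sum_(x | e * q x < p x) q x + d0 ->
  1 - d0 <= mA e p q.
Proof.
move=> hs hdp.
rewrite /mA (bigID (fun x => e * q x < p x)) /=.
rewrite (eq_bigr (fun x => e * q x)); last by move=> x hx; rewrite /cA0 hx.
rewrite [X in _ <= _ + X](eq_bigr (fun x => p x)); last by move=> x hx; rewrite /cA0 (negbTE hx).
rewrite -mulr_sumr.
move: hs; rewrite (bigID (fun x => e * q x < p x)) /= => hs.
lra.
Qed.

Lemma decomp_all (p q : K -> R) (d0 : R) :
  (forall x, 0 <= p x) -> (forall x, 0 <= q x) ->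
  \sum_x p x = 1 -> \sum_x q x = 1 ->
  (forall S : pred K, \sum_(x | S x) p x <= e * \sum_(x | S x) q x + d0) ->
  (forall S : pred K, \sum_(x | S x) q x <= e * \sum_(x | S x) p x + d0) ->
  [/\ forall x, 0 <= decA e p q x <= p x, forall x, 0 <= decB e p q x <= q x,
   \sum_x decA e p q x = \sum_x decB e p q x, 1 - d0 <= \sum_x decB e p q x &
   (forall x, decA e p q x <= e * decB e p q x) /\
   (forall x, decB e p q x <= e * decA e p q x)].
Proof.
move=> hp hq sp sq dpq dqp.
have l1 : 1 - d0 <= mA e p q by apply: (@mA_lb p q d0 sp); apply: dpq.
have l2 : 1 - d0 <= mA e q p by apply: (@mA_lb q p d0 sq); apply: dqp.
rewrite /decA /decB.
case: (boolP (mA e q p <= mA e p q)) => hle; rewrite ?hle ?(negbTE hle) /=.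
  have [f1 f2 f3 f4] := @half_facts p q hp hq hle.
  split => //.
  move=> x; case: (@cA0_facts q p x (hq x) (hp x)) => *; apply/andP; split => //.
have hle' : mA e p q <= mA e q p by rewrite ltW // ltNge.
have [f1 f2 f3 f4] := @half_facts q p hq hp hle'.
split => //.
- move=> x; case: (@cA0_facts p q x (hp x) (hq x)) => *; apply/andP; split => //.
- by rewrite f2.
Qed.

End Decomp.
Arguments cA0 {R K}.
Arguments mA {R K}.
Arguments tt {R K}.
Arguments shr {R K}.
Arguments decA {R K}.
Arguments decB {R K}.

Section Comp.
Variable R : realType.

Definition gfun (a : R) (s : nat) : R :=
  ((expR a - 1) * expR (-a) ^+ s.+1 + (1 - expR (-a)) * expR a ^+ s.+1) / (expR a - expR (-a)).

Lemma sum_sub_le (I : finType) (S : pred I) (f : I -> R) : (forall i, 0 <= f i) ->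
  \sum_(i | S i) f i <= \sum_i f i.
Proof.
move=> h; rewrite big_mkcond /=; apply: ler_sum => i _; case: (S i) => //.
Qed.

Lemma weier (r : nat) (m : 'I_r -> R) : (forall j, 0 <= m j <= 1) ->
  1 - \sum_j (1 - m j) <= \prod_j m j.
Proof.
elim: r m => [|r IH] m hm.
  by rewrite big_ord0 big_ord0; lra.
rewrite big_ord_recr big_ord_recr /=.
have h1 := IH (fun j => m (widen_ord (leqnSn r) j)) (fun j => hm _).
have h2 : \prod_(i < r) m (widen_ord (leqnSn r) i) <= 1.
  by apply: prodr_ile1 => i _; apply: hm.
have h3 : 0 <= \prod_(i < r) m (widen_ord (leqnSn r) i).
  by apply: prodr_ge0 => i _; case/andP: (hm (widen_ord (leqnSn r) i)).
have [h4 h5] := andP (hm ord_max).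
move: h1 h2 h3 h4 h5.
set Pr := \prod_(i < r) _. set Sm := \sum_(i < r) _. set x := m ord_max.
nra.
Qed.

Lemma tail_pt (X Y c : R) (s : nat) : 0 <= X -> 0 <= Y -> (Y = 0 -> X = 0) -> 0 < c ->
  X <= c * Y + (c ^+ s)^-1 * (X ^+ s.+1 / Y ^+ s).
Proof.
move=> hX hY hYX hc.
have hcs : 0 < c ^+ s by apply: exprn_gt0.
have [Y0|Yn] := eqVneq Y 0.
  by rewrite (hYX Y0) Y0 exprS !mul0r !mulr0 addr0.
have Yp : 0 < Y by rewrite lt_def Yn hY.
have ht : 0 <= (c ^+ s)^-1 * (X ^+ s.+1 / Y ^+ s).
  apply: mulr_ge0; first by rewrite invr_ge0 ltW.
  by apply: divr_ge0; apply: exprn_ge0 => //; apply: ltW.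
case: (lerP X (c * Y)) => hXY; first lra.
have e1 : (c ^+ s)^-1 * (X ^+ s.+1 / Y ^+ s) = X * (X / (c * Y)) ^+ s.
  rewrite exprSr expr_div_n exprMn; field.
  by apply/andP; split; apply: expf_neq0; rewrite gt_eqF.
rewrite e1.
have hge : 1 <= (X / (c * Y)) ^+ s.
  apply: exprn_ege1; rewrite ler_pdivlMr ?mul1r; last by apply: mulr_gt0.
  exact: ltW.
have hcy : 0 <= c * Y by apply: mulr_ge0; apply: ltW.
have : X <= X * (X / (c * Y)) ^+ s by rewrite -{1}[X]mulr1; apply: ler_wpM2l.
lra.
Qed.


Lemma gfun_ge0 (a : R) (s : nat) : 0 < a -> 0 <= gfun a s.
Proof.
move=> ha; rewrite /gfun.
have h1 : 1 <= expR a by rewrite -expR0 ler_expR; lra.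
have h2 : expR (-a) <= 1 by rewrite -expR0 ler_expR; lra.
have h3 : expR (-a) < expR a by rewrite ltr_expR; lra.
have p1 := expR_gt0 (-a).
apply: divr_ge0; last lra.
apply: addr_ge0; apply: mulr_ge0; try lra; apply: exprn_ge0; lra.
Qed.

Lemma col_sum (K : finType) (a : R) (s : nat) (A B : K -> R) : 0 < a ->
  (forall x, 0 <= A x) -> (forall x, 0 <= B x) ->
  \sum_x A x = \sum_x B x -> \sum_x B x <= 1 ->
  (forall x, A x <= expR a * B x) -> (forall x, B x <= expR a * A x) ->
  \sum_x A x ^+ s.+1 / B x ^+ s <= gfun a s.
Proof.
move=> ha hA hB hm hm1 hAB hBA.
set al := expR (-a). set be := expR a.
have hal : 0 < al by apply: expR_gt0.
have hab : al < be by rewrite ltr_expR; lra.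
have hab2 : 0 < al < be by apply/andP.
have eab : be * al = 1 by apply: expRxMexpNx_1.
set c1 := (be * al ^+ s.+1 - al * be ^+ s.+1) / (be - al).
set c2 := (be ^+ s.+1 - al ^+ s.+1) / (be - al).
have hbn : be - al != 0 by rewrite subr_eq0 gt_eqF.
apply: le_trans (_ : \sum_x (c1 * B x + c2 * A x) <= _).
  apply: ler_sum => x _.
  have hx : al * B x <= A x <= be * B x.
    apply/andP; split; last exact: hAB.
    have := hBA x; rewrite -/be => h.
    have : al * B x <= al * (be * A x) by apply: ler_wpM2l => //; apply: ltW.
    by move=> h2; apply: le_trans h2 _; rewrite mulrA [al * be]mulrC eab mul1r.
  apply: le_trans (@col_term R al be (A x) (B x) s hab2 (hB x) hx) _.
  rewrite le_eqVlt; apply/orP; left; apply/eqP.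
  by rewrite /c1 /c2; field.
rewrite big_split /= -!mulr_sumr -hm -mulrDl.
have eg : c1 + c2 = gfun a s by rewrite /c1 /c2 /gfun -/al -/be; field.
rewrite eg.
have hg := @gfun_ge0 a s ha.
rewrite -{2}[gfun a s]mulr1 ler_wpM2l //.
by rewrite hm.
Qed.

Lemma comp_main (K : finType) (r : nat) (a eps d0 : R) (s : nat) (P Q : 'I_r -> K -> R) :
  0 < a ->
  (forall j x, 0 <= P j x) -> (forall j x, 0 <= Q j x) ->
  (forall j, \sum_x P j x = 1) -> (forall j, \sum_x Q j x = 1) ->
  (forall j (S : pred K), \sum_(x | S x) P j x <= expR a * \sum_(x | S x) Q j x + d0) ->
  (forall j (S : pred K), \sum_(x | S x) Q j x <= expR a * \sum_(x | S x) P j x + d0) ->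
  forall S : pred {ffun 'I_r -> K},
  \sum_(t | S t) \prod_j P j (t j) <= expR eps * \sum_(t | S t) \prod_j Q j (t j)
     + (r%:R * d0 + expR (-(s%:R * eps)) * gfun a s ^+ r).
Proof.
move=> ha hP hQ sP sQ dPQ dQP S.
set e := expR a.
have e1 : 1 <= e by rewrite /e -expR0 ler_expR; lra.
pose A j := decA e (P j) (Q j).
pose B j := decB e (P j) (Q j).
have dec := fun j : 'I_r => @decomp_all _ _ e e1 (P j) (Q j) d0 (hP j) (hQ j) (sP j) (sQ j) (dPQ j) (dQP j).
have fA : forall j x, 0 <= A j x <= P j x by move=> j; case: (dec j).
have fB : forall j x, 0 <= B j x <= Q j x by move=> j; case: (dec j).
have fm : forall j, \sum_x A j x = \sum_x B j x by move=> j; case: (dec j).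
have fl : forall j, 1 - d0 <= \sum_x B j x by move=> j; case: (dec j).
have fAB : forall j x, A j x <= e * B j x by move=> j; case: (dec j) => _ _ _ _ [].
have fBA : forall j x, B j x <= e * A j x by move=> j; case: (dec j) => _ _ _ _ [].
have fA0 : forall j x, 0 <= A j x by move=> j x; case/andP: (fA j x).
have fB0 : forall j x, 0 <= B j x by move=> j x; case/andP: (fB j x).
have fm1 : forall j, \sum_x B j x <= 1.
  move=> j; rewrite -fm -(sP j); apply: ler_sum => x _; by case/andP: (fA j x).
have st1 : \sum_(t | S t) \prod_j P j (t j) <= \sum_(t | S t) \prod_j A j (t j) + r%:R * d0.
  suff : \sum_(t | S t) (\prod_j P j (t j) - \prod_j A j (t j)) <= r%:R * d0.
    by rewrite sumrB; lra.
  apply: le_trans (_ : \sum_(t : {ffun 'I_r -> K}) (\prod_j P j (t j) - \prod_j A j (t j)) <= _).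
    apply: sum_sub_le => t; rewrite subr_ge0; apply: ler_prod => j _; exact: fA.
  rewrite sumrB -!bigA_distr_bigA /=.
  rewrite (eq_bigr (fun _ => 1)); last by move=> j _; apply: sP.
  rewrite big1_eq.
  have hw := @weier r (fun j => \sum_x A j x) ltac:(move=> j; apply/andP; split;
     [apply: sumr_ge0 => x _; apply: fA0 | rewrite fm; apply: fm1]).
  have hs : \sum_(j < r) (1 - \sum_x A j x) <= r%:R * d0.
    have -> : r%:R * d0 = \sum_(j < r) d0 by rewrite sumr_const card_ord mulr_natl.
    by apply: ler_sum => j _; rewrite fm; have := fl j; lra.
  lra.
have st2 : \sum_(t | S t) \prod_j B j (t j) <= \sum_(t | S t) \prod_j Q j (t j).
  by apply: ler_sum => t _; apply: ler_prod => j _; exact: fB.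
set c := expR eps.
have hc : 0 < c by apply: expR_gt0.
have ecs : expR (-(s%:R * eps)) = (c ^+ s)^-1 by rewrite expRN expRM_natl.
pose hh j x := A j x ^+ s.+1 / B j x ^+ s.
have hpt : forall t : {ffun 'I_r -> K}, \prod_j A j (t j) <=
    c * \prod_j B j (t j) + (c ^+ s)^-1 * \prod_j hh j (t j).
  move=> t.
  have -> : \prod_j hh j (t j) = (\prod_j A j (t j)) ^+ s.+1 / (\prod_j B j (t j)) ^+ s.
    by rewrite /hh prodf_div !prodrXl.
  apply: tail_pt => //.
  - by apply: prodr_ge0 => j _; apply: fA0.
  - by apply: prodr_ge0 => j _; apply: fB0.
  move=> /eqP /prodf_eq0 [j _ /eqP hj]; apply/eqP/prodf_eq0; exists j => //.
  have := fAB j (t j); rewrite hj mulr0 => h.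
  by apply/eqP; apply: le_anti; rewrite h fA0.
have st3 : \sum_(t | S t) \prod_j A j (t j) <=
    c * \sum_(t | S t) \prod_j B j (t j) + (c ^+ s)^-1 * gfun a s ^+ r.
  apply: le_trans (_ : \sum_(t | S t) (c * \prod_j B j (t j) + (c ^+ s)^-1 * \prod_j hh j (t j)) <= _).
    by apply: ler_sum => t _; apply: hpt.
  rewrite big_split /= -!mulr_sumr lerD2l.
  apply: ler_wpM2l; first by rewrite invr_ge0 exprn_ge0 // ltW.
  apply: le_trans (_ : \sum_(t : {ffun 'I_r -> K}) \prod_j hh j (t j) <= _).
    apply: sum_sub_le => t; apply: prodr_ge0 => j _; apply: divr_ge0; apply: exprn_ge0.
      exact: fA0.
    exact: fB0.
  rewrite -bigA_distr_bigA /=.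
  rewrite -[X in _ <= _ ^+ X]card_ord -prodr_const.
  apply: ler_prod => j _; apply/andP; split.
    apply: sumr_ge0 => x _; apply: divr_ge0; apply: exprn_ge0; [exact: fA0|exact: fB0].
  apply: col_sum => //.
have st2c := ler_wpM2l (ltW hc) st2.
rewrite ecs; lra.
Qed.

End Comp.
Arguments gfun {R}.

Section Mix.
Variable R : realType.

Definition upd (V : finType) (n : nat) (B : {ffun 'I_n -> V}) (k : 'I_n) (v : V) : {ffun 'I_n -> V} :=
  [ffun i => if i == k then v else B i].
Arguments upd {V n}.

Lemma upd_upd (V : finType) (n : nat) (B : {ffun 'I_n -> V}) k v :
  upd (upd B k v) k (B k) = B.
Proof. by apply/ffunP => i; rewrite !ffunE; case: eqP => // ->. Qed.

Lemma upd_k (V : finType) (n : nat) (B : {ffun 'I_n -> V}) k v : upd B k v k = v.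
Proof. by rewrite ffunE eqxx. Qed.

Lemma mixing (V : finType) (n : nat) (k : 'I_n) (w w' : 'I_n -> V -> R)
  (G : {ffun 'I_n -> V} -> R) (c d : R) :
  (forall i v, 0 <= w i v) -> (forall i v, 0 <= w' i v) ->
  (forall i, \sum_v w i v = 1) -> (forall i, \sum_v w' i v = 1) ->
  (forall i, i != k -> forall v, w i v = w' i v) ->
  (forall B B' : {ffun 'I_n -> V}, (forall i, i != k -> B i = B' i) -> G B <= c * G B' + d) ->
  \sum_(B : {ffun 'I_n -> V}) (\prod_i w i (B i)) * G B <=
  c * \sum_(B : {ffun 'I_n -> V}) (\prod_i w' i (B i)) * G B + d.
Proof.
move=> hw hw' sw sw' weq hG.
pose Rk (B : {ffun 'I_n -> V}) := \prod_(i | i != k) w i (B i).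
have eW : forall B : {ffun 'I_n -> V}, \prod_i w i (B i) = w k (B k) * Rk B.
  by move=> B; rewrite (bigD1 k) //.
have eW' : forall B : {ffun 'I_n -> V}, \prod_i w' i (B i) = w' k (B k) * Rk B.
  move=> B; rewrite (bigD1 k) //=; congr (_ * _); apply: eq_bigr => i hi.
  by rewrite weq.
have eR : forall (B : {ffun 'I_n -> V}) v, Rk (upd B k v) = Rk B.
  move=> B v; apply: eq_bigr => i hi; by rewrite ffunE (negbTE hi).
have sW : \sum_(B : {ffun 'I_n -> V}) \prod_i w i (B i) = 1.
  by rewrite -bigA_distr_bigA /= big1 // => i _; apply: sw.
have hR0 : forall B, 0 <= Rk B by move=> B; apply: prodr_ge0 => i _; apply: hw.
have st1 : \sum_(B : {ffun 'I_n -> V}) (\prod_i w i (B i)) * G B =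
    \sum_(B : {ffun 'I_n -> V}) \sum_v (w' k v * (w k (B k) * Rk B) * G B).
  apply: eq_bigr => B _; rewrite eW -big_distrl /= -big_distrl /= sw' mul1r //.
rewrite st1.
apply: le_trans (_ : \sum_(B : {ffun 'I_n -> V}) \sum_v (w' k v * (w k (B k) * Rk B) * (c * G (upd B k v) + d)) <= _).
  apply: ler_sum => B _; apply: ler_sum => v _; apply: ler_wpM2l.
    by apply: mulr_ge0; [apply: hw' | apply: mulr_ge0; [apply: hw | apply: hR0]].
  apply: hG => i hi; by rewrite ffunE (negbTE hi).
have split1 : forall B : {ffun 'I_n -> V}, forall v,
  w' k v * (w k (B k) * Rk B) * (c * G (upd B k v) + d) =
  c * (w' k v * (w k (B k) * Rk B) * G (upd B k v)) + d * (w' k v * (w k (B k) * Rk B)).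
  by move=> B v; ring.
under eq_bigr do under eq_bigr do rewrite split1.
rewrite (eq_bigr (fun B : {ffun 'I_n -> V} => c * \sum_v (w' k v * (w k (B k) * Rk B) * G (upd B k v)) +
   d * \sum_v (w' k v * (w k (B k) * Rk B)))); last first.
  by move=> B _; rewrite big_split /= -!mulr_sumr.
rewrite big_split /= -!mulr_sumr.
have sd : \sum_(B : {ffun 'I_n -> V}) \sum_v (w' k v * (w k (B k) * Rk B)) = 1.
  rewrite -sW; apply: eq_bigr => B _; rewrite -big_distrl /= sw' mul1r eW //.
rewrite sd mulr1 lerD2r.
suff -> : \sum_(B : {ffun 'I_n -> V}) \sum_v (w' k v * (w k (B k) * Rk B) * G (upd B k v)) =
   \sum_(B : {ffun 'I_n -> V}) (\prod_i w' i (B i)) * G B by [].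
rewrite pair_bigA /=.
rewrite (reindex_inj (h := fun p : {ffun 'I_n -> V} * V => (upd p.1 k p.2, p.1 k))) /=; last first.
  apply: (can_inj (g := fun p : {ffun 'I_n -> V} * V => (upd p.1 k p.2, p.1 k))).
  by case=> B v /=; rewrite upd_upd upd_k.
rewrite (eq_bigr (fun p : {ffun 'I_n -> V} * V => (w k p.2) * ((\prod_i w' i (p.1 i)) * G p.1))); last first.
  by case=> B v _ /=; rewrite upd_upd upd_k eR eW'; ring.
rewrite -(pair_bigA _ (fun (B : {ffun 'I_n -> V}) (v : V) => w k v * (\prod_i w' i (B i) * G B))) /=.
apply: eq_bigr => B _; by rewrite -big_distrl /= sw mul1r.
Qed.

End Mix.

Section Proto.
Variable R : realType.

Lemma lamn_01 {n : nat} {lam : R} : 0 <= lam <= n%:R -> 0 <= lam / n%:R <= 1.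
Proof.
move=> /andP[h1 h2]; case: n h2 => [|n] h2.
  by rewrite invr0 mulr0 lexx ler01.
apply/andP; split; first by apply: divr_ge0.
by rewrite ler_pdivrMr ?ltr0Sn // mul1r.
Qed.

Lemma randP_ge0 (n : nat) (lam : R) b y : 0 <= lam <= n%:R -> 0 <= randP n lam b y.
Proof.
move=> h; have /andP[q0 q1] := lamn_01 h; rewrite /randP.
apply: addr_ge0; last by apply: divr_ge0.
by apply: mulr_ge0; [lra | case: (b == y)].
Qed.

Lemma randP_sum (n : nat) (lam : R) b : \sum_y randP n lam b y = 1.
Proof. rewrite big_bool /randP; set q := lam / n%:R; case: b => /=; lra. Qed.

Lemma mix_expand (V Y : finType) (n : nat) (wt : 'I_n -> V -> R) (rho : V -> Y -> R)
  (P : pred {ffun 'I_n -> Y}) :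
  \sum_(y | P y) \prod_i (\sum_v wt i v * rho v (y i)) =
  \sum_(B : {ffun 'I_n -> V}) (\prod_i wt i (B i)) * \sum_(y | P y) \prod_i rho (B i) (y i).
Proof.
under eq_bigr do rewrite bigA_distr_bigA.
under eq_bigr do under eq_bigr do rewrite big_split.
rewrite exchange_big /=.
apply: eq_bigr => B _; by rewrite mulr_sumr.
Qed.

Definition pmix (n : nat) (ls lam : R) : R := (lam - ls) / (n%:R - ls).
Definition piw (n : nat) (ls lam : R) (b v : bool) : R :=
  (1 - pmix n ls lam) * (b == v)%:R + pmix n ls lam / 2.

Lemma pmix_01 {n : nat} {ls lam : R} : 0 <= ls -> ls <= lam <= n%:R -> 0 <= pmix n ls lam <= 1.
Proof.
move=> h0 /andP[h1 h2]; rewrite /pmix.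
have [hz|hnz] := eqVneq (n%:R - ls) 0.
  by rewrite hz invr0 mulr0 lexx ler01.
have hp : 0 < n%:R - ls by rewrite lt_def hnz /=; lra.
apply/andP; split; first by apply: divr_ge0; lra.
by rewrite ler_pdivrMr //; lra.
Qed.

Lemma piw_ge0 n (ls lam : R) b v : 0 <= ls -> ls <= lam <= n%:R -> 0 <= piw n ls lam b v.
Proof.
move=> h0 h; have /andP[p0 p1] := pmix_01 h0 h; rewrite /piw.
apply: addr_ge0; last by apply: divr_ge0.
by apply: mulr_ge0; [lra | case: (b == v)].
Qed.

Lemma piw_sum n (ls lam : R) b : \sum_v piw n ls lam b v = 1.
Proof. rewrite big_bool /piw; set q := pmix n ls lam; case: b => /=; lra. Qed.

Lemma randP_mix {n : nat} {ls lam : R} b y : 0 <= ls -> ls <= lam <= n%:R ->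
  \sum_v piw n ls lam b v * randP n ls v y = randP n lam b y.
Proof.
move=> h0 /andP[h1 h2].
have key : (1 - pmix n ls lam) * (1 - ls / n%:R) = 1 - lam / n%:R.
  rewrite /pmix.
  have [hz|hnz] := eqVneq (n%:R - ls) 0.
    have -> : lam = ls by lra.
    by rewrite hz invr0 mulr0 subr0 mul1r.
  have hn : n%:R != 0 :> R.
    apply/eqP => hn0; have hls : ls = 0 by lra.
    by move: hnz; rewrite hn0 hls subr0 eqxx.
  field; by apply/andP.
rewrite big_bool /piw /randP.
move: key; set p := pmix n ls lam; set Q := ls / n%:R; set L := lam / n%:R => key.
case: b; case: y => /=; nra.
Qed.

Lemma bitsum_expand {n : nat} {ls lam : R} (X : 'I_n -> bool) T : 0 <= ls -> ls <= lam <= n%:R ->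
  bitsum_prob n lam X T =
  \sum_(B : {ffun 'I_n -> bool}) (\prod_i piw n ls lam (X i) (B i)) * bitsum_prob n ls B T.
Proof.
move=> h0 h; rewrite /bitsum_prob.
rewrite -(@mix_expand _ _ _ (fun i => piw n ls lam (X i)) (randP n ls) (fun y => T (bitsum_view y))).
apply: eq_bigr => y _; apply: eq_bigr => i _; by rewrite randP_mix.
Qed.

Lemma bitsum_mono (n : nat) (ls lam e d : R) : 0 <= ls -> ls <= lam <= n%:R ->
  bitsum_private n ls e d -> bitsum_private n lam e d.
Proof.
move=> h0 h hp X X' _ _ [k hk] T.
rewrite (bitsum_expand X T h0 h) (bitsum_expand X' T h0 h).
apply: (@mixing R bool n k (fun i => piw n ls lam (X i)) (fun i => piw n ls lam (X' i)) (fun B : {ffun 'I_n -> bool} => bitsum_prob n ls B T) (expR e) d).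
- by move=> i v; apply: piw_ge0.
- by move=> i v; apply: piw_ge0.
- by move=> i; apply: piw_sum.
- by move=> i; apply: piw_sum.
- by move=> i hi v; rewrite hk.
- move=> B B' hBB; apply: hp => //; by exists k.
Qed.

End Proto.

Section Cols.
Variable R : realType.

Definition cnt1 {n : nat} (c : {ffun 'I_n -> bool}) : 'I_n.+1 := inord #|[set i | c i]|.
Definition colP (n : nat) (lam : R) (a : 'I_n -> bool) (t : 'I_n.+1) : R :=
  \sum_(c : {ffun 'I_n -> bool} | cnt1 c == t) \prod_i randP n lam (a i) (c i).
Definition mk {n r : nat} (t : {ffun 'I_r -> 'I_n.+1}) : mset_out :=
  [ffun m : bool => if m then (\sum_j (t j : nat))%N else (\sum_j (n - t j))%N].
Definition counts {n r : nat} (y : {ffun 'I_n -> {ffun 'I_r -> bool}}) : {ffun 'I_r -> 'I_n.+1} :=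
  [ffun j => cnt1 [ffun i => y i j]].
Definition Fr (n r : nat) (lam : R) (B : {ffun 'I_n -> {ffun 'I_r -> bool}}) (T : pred mset_out) : R :=
  \sum_(y : {ffun 'I_n -> {ffun 'I_r -> bool}} | T (realsum_view y))
     \prod_i \prod_j randP n lam (B i j) (y i j).

Lemma card_sum (I : finType) (P : pred I) : #|[set i | P i]| = (\sum_i (P i : nat))%N.
Proof.
rewrite -sum1_card big_mkcond /=; apply: eq_bigr => i _; rewrite inE; by case: (P i).
Qed.

Lemma cnt1E {n : nat} (c : {ffun 'I_n -> bool}) : (cnt1 c : nat) = #|[set i | c i]|.
Proof.
rewrite /cnt1 inordK // ltnS; apply: leq_trans (max_card _) _; by rewrite card_ord.
Qed.

Lemma view_counts {n r : nat} (y : {ffun 'I_n -> {ffun 'I_r -> bool}}) :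
  realsum_view y = mk (counts y).
Proof.
apply/ffunP => m; rewrite !ffunE.
have e1 : #|[set p : 'I_n * 'I_r | y p.1 p.2 == m]| = (\sum_j #|[set i | y i j == m]|)%N.
  rewrite card_sum -(pair_bigA _ (fun i j => (y i j == m : nat))) /= exchange_big /=.
  by apply: eq_bigr => j _; rewrite card_sum.
rewrite e1; clear e1; case: m.
  apply: eq_bigr => j _; rewrite ffunE cnt1E.
  have -> : [set i | y i j == true] = [set i | [ffun i0 => y i0 j] i].
    by apply/setP => i; rewrite !inE ffunE; case: (y i j).
  by [].
apply: eq_bigr => j _; rewrite ffunE cnt1E.
have -> : [set i | y i j == false] = ~: [set i | [ffun i0 => y i0 j] i].
  by apply/setP => i; rewrite !inE ffunE; case: (y i j).
by rewrite -[n in (n - _)%N](card_ord n) -(cardsC [set i | [ffun i0 => y i0 j] i]) addKn.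
Qed.

Definition trn {n r : nat} (Y : {ffun 'I_r -> {ffun 'I_n -> bool}}) : {ffun 'I_n -> {ffun 'I_r -> bool}} :=
  [ffun i => [ffun j => Y j i]].
Definition trn' {n r : nat} (y : {ffun 'I_n -> {ffun 'I_r -> bool}}) : {ffun 'I_r -> {ffun 'I_n -> bool}} :=
  [ffun j => [ffun i => y i j]].

Lemma trnK {n r : nat} : cancel (@trn n r) trn'.
Proof. by move=> Y; apply/ffunP => j; apply/ffunP => i; rewrite !ffunE. Qed.
Lemma trnK' {n r : nat} : cancel (@trn' n r) trn.
Proof. by move=> y; apply/ffunP => i; apply/ffunP => j; rewrite !ffunE. Qed.

Lemma prod_ind {r N : nat} (a t : {ffun 'I_r -> 'I_N}) :
  \prod_j ((a j == t j)%:R : R) = (a == t)%:R.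
Proof.
case: (eqVneq a t) => [->|hne].
  by rewrite big1 // => j _; rewrite eqxx.
have [j hj] : exists j, a j != t j.
  apply/existsP; move: hne; apply: contraR; rewrite negb_exists => /forallP h.
  by apply/eqP/ffunP => j; have := h j; rewrite negbK => /eqP.
by rewrite (bigD1 j) //= (negbTE hj) mul0r.
Qed.

Lemma Fr_cols (n r : nat) (lam : R) (B : {ffun 'I_n -> {ffun 'I_r -> bool}}) (T : pred mset_out) :
  Fr n r lam B T = \sum_(t : {ffun 'I_r -> 'I_n.+1} | T (mk t))
     \prod_j colP n lam (fun i => B i j) (t j).
Proof.
pose g (j : 'I_r) (c : {ffun 'I_n -> bool}) := \prod_i randP n lam (B i j) (c i).
have e1 : forall t : {ffun 'I_r -> 'I_n.+1}, \prod_j colP n lam (fun i => B i j) (t j) =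
   \sum_(Y : {ffun 'I_r -> {ffun 'I_n -> bool}}) ([ffun j => cnt1 (Y j)] == t)%:R * \prod_j g j (Y j).
  move=> t.
  rewrite (eq_bigr (fun j => \sum_c ((cnt1 c == t j)%:R * g j c))); last first.
    move=> j _; rewrite /colP big_mkcond /=; apply: eq_bigr => c _.
    by case: (cnt1 c == t j); rewrite ?mul1r ?mul0r.
  rewrite bigA_distr_bigA /=; apply: eq_bigr => Y _.
  rewrite big_split /=; congr (_ * _).
  rewrite -prod_ind; apply: eq_bigr => j _; by rewrite ffunE.
rewrite (eq_bigr _ (fun t _ => e1 t)) exchange_big /=.
rewrite (eq_bigr (fun Y : {ffun 'I_r -> {ffun 'I_n -> bool}} =>
   (T (mk [ffun j => cnt1 (Y j)]))%:R * \prod_j g j (Y j))); last first.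
  move=> Y _; rewrite -mulr_suml; congr (_ * _).
  rewrite big_mkcond (bigD1 [ffun j => cnt1 (Y j)]) //= eqxx big1.
    by rewrite addr0; case: (T _).
  move=> t ht; rewrite eq_sym (negbTE ht); by case: (T _).
rewrite /Fr (reindex trn) /=; last by apply: onW_bij; exists trn'; [apply: trnK | apply: trnK'].
rewrite big_mkcond; apply: eq_bigr => Y _.
have ec : counts (trn Y) = [ffun j => cnt1 (Y j)].
  apply/ffunP => j; rewrite !ffunE; congr cnt1; apply/ffunP => i; by rewrite !ffunE.
rewrite view_counts ec.
case: (T _); rewrite ?mul1r ?mul0r //.
rewrite exchange_big /=; apply: eq_bigr => j _; apply: eq_bigr => i _; by rewrite !ffunE.
Qed.

End Cols.
Arguments colP {R}.
Arguments Fr {R}.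

Section Final.
Variable R : realType.

Lemma colP_set (n : nat) (lam : R) (a : 'I_n -> bool) (S : pred 'I_n.+1) :
  \sum_(t | S t) colP n lam a t = bitsum_prob n lam a (fun v => S (inord (v true))).
Proof.
rewrite /bitsum_prob.
rewrite (eq_bigl (fun y : {ffun 'I_n -> bool} => S (cnt1 y))); last first.
  move=> y; rewrite /= ffunE /cnt1.
  have -> : [set i | y i == true] = [set i | y i] by apply/setP => i; rewrite !inE; case: (y i).
  by [].
rewrite (partition_big cnt1 S) //=.
apply: eq_bigr => t ht; apply: eq_bigl => y.
by case: eqP => [->|]; rewrite ?ht ?andbF.
Qed.

Lemma colP_ge0 (n : nat) (lam : R) (a : 'I_n -> bool) t : 0 <= lam <= n%:R -> 0 <= colP n lam a t.
Proof.
move=> h; apply: sumr_ge0 => c _; apply: prodr_ge0 => i _; exact: randP_ge0.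
Qed.

Lemma colP_sum (n : nat) (lam : R) (a : 'I_n -> bool) : \sum_t colP n lam a t = 1.
Proof.
have := @colP_set n lam a predT; rewrite /= => ->.
rewrite /bitsum_prob /=.
rewrite -(bigA_distr_bigA (fun i y => randP n lam (a i) y)) /=.
by rewrite big1 // => i _; apply: randP_sum.
Qed.


Lemma prod_bits (r : nat) (f : 'I_r -> R) : (forall j, 0 <= f j <= 1) ->
  (forall b : {ffun 'I_r -> bool}, 0 <= \prod_j (if b j then f j else 1 - f j)) /\
  \sum_(b : {ffun 'I_r -> bool}) \prod_j (if b j then f j else 1 - f j) = 1.
Proof.
move=> hf; split.
  move=> b; apply: prodr_ge0 => j _; case/andP: (hf j) => h1 h2; case: (b j); lra.
rewrite -(bigA_distr_bigA (fun j (v : bool) => if v then f j else 1 - f j)) /=.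
rewrite big1 // => j _; rewrite big_bool /=; ring.
Qed.

Lemma encP_dist (r : nat) (x : R) : 0 <= x <= 1 ->
  (forall b, 0 <= encP r x b) /\ \sum_b encP r x b = 1.
Proof.
move=> hx.
set mu := Num.ceil (x * r%:R).
set p := x * r%:R - mu%:~R + 1.
have [c1 c2] := andP (ceil_itv (x * r%:R)).
have hp : 0 <= p <= 1.
  rewrite /p; move: c1 c2; rewrite -/mu intrD => c1 c2; apply/andP; split; lra.
pose f (j : 'I_r) := if ((j.+1)%:Z < mu)%R then 1 else if ((j.+1)%:Z == mu) then p else 0.
have E : forall b, encP r x b = \prod_j (if b j then f j else 1 - f j) by [].
have hf : forall j, 0 <= f j <= 1.
  move=> j; rewrite /f; case: ifP => _; first by rewrite ler01 lexx.
  by case: ifP => _ //; rewrite lexx ler01.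
have [h1 h2] := @prod_bits r f hf.
by split; [move=> b; rewrite E | under eq_bigr do rewrite E].
Qed.

Lemma realsum_expand (n r : nat) (lam : R) (X : 'I_n -> R) T :
  realsum_prob n r lam X T = \sum_(B : {ffun 'I_n -> {ffun 'I_r -> bool}})
     (\prod_i encP r (X i) (B i)) * Fr n r lam B T.
Proof.
rewrite /realsum_prob /userP /Fr.
exact: (@mix_expand R _ _ n (fun i => encP r (X i))
   (fun b yi : {ffun 'I_r -> bool} => \prod_j randP n lam (b j) (yi j)) (fun y => T (realsum_view y))).
Qed.

Lemma Fr_ge0 (n r : nat) (lam : R) B T : 0 <= lam <= n%:R -> 0 <= Fr n r lam B T.
Proof.
move=> h; apply: sumr_ge0 => y _; apply: prodr_ge0 => i _; apply: prodr_ge0 => j _.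
exact: randP_ge0.
Qed.

Lemma Fr_dp (n r : nat) (lam e0 d0 eps : R) (s : nat)
  (B B' : {ffun 'I_n -> {ffun 'I_r -> bool}}) (k : 'I_n) T :
  0 < e0 -> 0 <= lam <= n%:R -> bitsum_private n lam e0 d0 ->
  (forall i, i != k -> B i = B' i) ->
  Fr n r lam B T <= expR eps * Fr n r lam B' T +
     (r%:R * d0 + expR (-(s%:R * eps)) * gfun e0 s ^+ r).
Proof.
move=> he0 hl hdp hB.
rewrite !Fr_cols.
apply: (@comp_main R 'I_n.+1 r e0 eps d0 s (fun j => colP n lam (fun i => B i j))
   (fun j => colP n lam (fun i => B' i j)) he0).
- by move=> j x; apply: colP_ge0.
- by move=> j x; apply: colP_ge0.
- by move=> j; apply: colP_sum.
- by move=> j; apply: colP_sum.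
- move=> j S; rewrite !colP_set; apply: hdp => //; exists k => i hi; by rewrite hB.
- move=> j S; rewrite !colP_set; apply: hdp => //; exists k => i hi; by rewrite hB.
Qed.

End Final.

Theorem theorem5p4 (R : realType) (eps delta : R) (n r : nat) (ls : R) :
  0 < eps < 1 -> 0 < delta < 1 ->
  is_lambda_star n (eps / Num.sqrt (8 * r%:R * ln (2 / delta))) (delta / (2 * r%:R)) ls ->
  forall lam : R, ls <= lam <= n%:R -> realsum_private n r lam eps delta.
Proof.
move=> he hd [hls0 hpriv _] lam hlam.
have [e0 e1] := andP he. have [d0 d1] := andP hd.
have [l1 l2] := andP hls0. have [m1 m2] := andP hlam.
have hl : 0 <= lam <= n%:R by apply/andP; split; lra.
move=> X X' hX hX' [k hk] T.
rewrite !realsum_expand.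
apply: (@mixing R {ffun 'I_r -> bool} n k (fun i => encP r (X i)) (fun i => encP r (X' i))
   (fun B => Fr n r lam B T) (expR eps) delta).
- by move=> i v; case: (@encP_dist R r (X i) (hX i)) => h _; apply: h.
- by move=> i v; case: (@encP_dist R r (X' i) (hX' i)) => h _; apply: h.
- by move=> i; case: (@encP_dist R r (X i) (hX i)).
- by move=> i; case: (@encP_dist R r (X' i) (hX' i)).
- by move=> i hi v; rewrite hk.
move=> B B' hBB.
have hF0 := @Fr_ge0 R n r lam B' T hl.
have hE1 : 1 <= expR eps by rewrite -expR0 ler_expR; lra.
case: (posnP r) => hr.
  subst r.
  have -> : B = B'.
    apply/ffunP => i; case: (eqVneq i k) => [->|hi]; last by apply: hBB.
    by apply/ffunP => -[].
  nra.
set L := ln (2 / delta).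
have hL : 0 < L by apply: ln_gt0; rewrite ltr_pdivlMr //; lra.
set a := eps / Num.sqrt (8 * r%:R * L).
have hr' : (0 : R) < r%:R by rewrite ltr0n.
have ha : 0 < a by apply: divr_gt0 => //; rewrite sqrtr_gt0; nra.
set s := Num.trunc (4 * L / eps).
have hmono := @bitsum_mono R n ls lam _ _ l1 hlam hpriv.
have h1 := @Fr_dp R n r lam a (delta / (2 * r%:R)) eps s B B' k T ha hl hmono hBB.
apply: le_trans h1 _; rewrite lerD2l.
have hfin := @final_num R eps delta r he hd hr.
rewrite -/L -/s -/a in hfin.
apply: le_trans hfin; rewrite lerD2l; apply: ler_wpM2l; first by apply: ltW; apply: expR_gt0.
apply: lerXn2r; rewrite ?nnegrE ?gfun_ge0 ?expR_ge0 //.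
exact: g_bound.
Qed.
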